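(* With the concrete categories defined in the context (all concrete over $\mathsf{Set}$ via the underlying-set functor), the following hold: (1) $\mathsf{Top}$ is concretely reflective in $\mathsf{PreTop}$; (2) $\mathsf{PreTop}$ is concretely reflective and concretely coreflective in $\mathsf{Filterbase}$; (3) $\mathsf{PreTop}$ is concretely coreflective in $\mathsf{Raster}$; (4) $\mathsf{Filterbase}$ is concretely coreflective in $\mathsf{Centered}$; (5) $\mathsf{Raster}$ is concretely reflective and concretely coreflective in $\mathsf{Centered}$.
   Context: A centered space is a set $X$ together with an assignment to each $x\in X$ of a nonempty collection $\nu(x)$ of subsets of $X$ such that $x\in N$ for all $N\in\nu(x)$. A function $f\colon X\to Y$ between centered spaces $(X,\nu_X),(Y,\nu_Y)$ is centered if for every $x\in X$ and every $M\in\nu_Y(f(x))$ there is $N\in\nu_X(x)$ with $f(N)\subseteq M$. $\mathsf{Centered}$ is the category of centered spaces and centered maps. A nonempty collection $\mathcal P$ of subsets of $X$ is a raster if (F0) every finite intersection $A_1\cap\cdots\cap A_n$ ($n\ge1$) of members is nonempty and (F1) $A\supseteq B\in\mathcal P\Rightarrow A\in\mathcal P$; a filterbase if (F0) and (F2) for $A,B\in\mathcal P$ there is $C\in\mathcal P$ with $C\subseteq A\cap B$; a filter if (F0),(F1),(F2). $\mathsf{Raster}$, $\mathsf{Filterbase}$, $\mathsf{PreTop}$ are the full subcategories of $\mathsf{Centered}$ whose objects have every $\nu(x)$ a raster, a filterbase, a filter, respectively. $\mathsf{Top}$ is the full subcategory of $\mathsf{PreTop}$ consisting of those $(X,\nu)$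 for which there is a topology $\tau$ on $X$ such that, for every $x$, $\nu(x)$ is the set of all $A\subseteq X$ containing some $U\in\tau$ with $x\in U$. For a concrete category $\mathsf C$ and a full concrete subcategory $\mathsf C'$: $\mathsf C'$ is concretely reflective in $\mathsf C$ if for each object $C$ of $\mathsf C$ there is an object $C'$ of $\mathsf C'$ with the same underlying set such that the identity map $C\to C'$ is a morphism and every morphism from $C$ to an object $D$ of $\mathsf C'$ is also a morphism $C'\to D$ (with the same underlying function); $\mathsf C'$ is concretely coreflective in $\mathsf C$ if for each $C$ there is $C'$ in $\mathsf C'$ with the same underlying set such that the identity map $C'\to C$ is a morphism and every morphism from an object $D$ of $\mathsf C'$ to $C$ is also a morphism $D\to C'$. *)

(* Defs.v *)
From Stdlib Require Import List.
Import ListNotations.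
Set Implicit Arguments.

Definition Nbhd (X : Type) := X -> (X -> Prop) -> Prop.

Definition is_centered (X : Type) (nu : Nbhd X) : Prop :=
  forall x, (exists N, nu x N) /\ (forall N, nu x N -> N x).

Definition centered_map (X Y : Type) (nuX : Nbhd X) (nuY : Nbhd Y) (f : X -> Y) : Prop :=
  forall x (M : Y -> Prop), nuY (f x) M ->
    exists N, nuX x N /\ (forall y, N y -> M (f y)).

Definition F0 (X : Type) (P : (X -> Prop) -> Prop) : Prop :=
  forall l : list (X -> Prop), l <> [] -> Forall P l ->
    exists x, Forall (fun A => A x) l.
Definition F1 (X : Type) (P : (X -> Prop) -> Prop) : Prop :=
  forall A B : X -> Prop, P B -> (forall x, B x -> A x) -> P A.
Definition F2 (X : Type) (P : (X -> Prop) -> Prop) : Prop :=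
  forall A B, P A -> P B -> exists C, P C /\ (forall x, C x -> A x /\ B x).
Definition nonempty_coll (X : Type) (P : (X -> Prop) -> Prop) : Prop :=
  exists A, P A.

Definition is_raster X (P : (X -> Prop) -> Prop) := nonempty_coll P /\ F0 P /\ F1 P.
Definition is_filterbase X (P : (X -> Prop) -> Prop) := nonempty_coll P /\ F0 P /\ F2 P.
Definition is_filter X (P : (X -> Prop) -> Prop) := nonempty_coll P /\ F0 P /\ F1 P /\ F2 P.

Definition SpaceClass := forall X : Type, Nbhd X -> Prop.

Definition Centered : SpaceClass := fun X nu => is_centered nu.
Definition Raster : SpaceClass := fun X nu => is_centered nu /\ forall x, is_raster (nu x).
Definition Filterbase : SpaceClass :=
  fun X nu => is_centered nu /\ forall x, is_filterbase (nu x).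
Definition PreTop : SpaceClass := fun X nu => is_centered nu /\ forall x, is_filter (nu x).

Definition is_topology (X : Type) (tau : (X -> Prop) -> Prop) : Prop :=
  tau (fun _ => False) /\ tau (fun _ => True) /\
  (forall U V, tau U -> tau V -> tau (fun x => U x /\ V x)) /\
  (forall F : (X -> Prop) -> Prop, (forall U, F U -> tau U) ->
      tau (fun x => exists U, F U /\ U x)).

Definition Top : SpaceClass := fun X nu =>
  PreTop nu /\
  exists tau, is_topology tau /\
    forall x (A : X -> Prop),
      nu x A <-> exists U, tau U /\ U x /\ (forall y, U y -> A y).

(* Concrete (co)reflectivity of the full subcategory C' in C
   (morphisms are centered maps, identity carried by id). *)
Definition concretely_reflective (C' C : SpaceClass) : Prop :=
  forall (X : Type) (nu : Nbhd X), C X nu ->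
    exists nu' : Nbhd X, C' X nu' /\ centered_map nu nu' (fun x => x) /\
      forall (Y : Type) (mu : Nbhd Y) (f : X -> Y),
        C' Y mu -> centered_map nu mu f -> centered_map nu' mu f.

Definition concretely_coreflective (C' C : SpaceClass) : Prop :=
  forall (X : Type) (nu : Nbhd X), C X nu ->
    exists nu' : Nbhd X, C' X nu' /\ centered_map nu' nu (fun x => x) /\
      forall (Y : Type) (mu : Nbhd Y) (f : Y -> X),
        C' Y mu -> centered_map mu nu f -> centered_map mu nu' f.

(* Main.v *)
Require Import Defs.
From Stdlib Require Import List.
Import ListNotations.
Set Implicit Arguments.

Definition upc X (nu : Nbhd X) : Nbhd X :=
  fun x A => exists N, nu x N /\ forall y, N y -> A y.
Definition gen X (nu : Nbhd X) : Nbhd X :=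
  fun x A => exists l, l <> [] /\ Forall (nu x) l /\
    forall y, Forall (fun B : X -> Prop => B y) l -> A y.

Lemma F0_of X (P : (X -> Prop) -> Prop) x : (forall N, P N -> N x) -> F0 P.
Proof.
  intros H l _ Hl. exists x. eapply Forall_impl; [|exact Hl]. exact H.
Qed.

Lemma upc_centered X (nu : Nbhd X) : is_centered nu -> is_centered (upc nu).
Proof.
  intros H x. destruct (H x) as [[N HN] Hm]. split.
  - exists N, N. split; auto.
  - intros A [M [HM HA]]. apply HA, Hm, HM.
Qed.

Lemma upc_raster X (nu : Nbhd X) : is_centered nu -> @Raster X (upc nu).
Proof.
  intros H. pose proof (upc_centered H) as Hc. split; auto.
  intros x. destruct (Hc x) as [Hn Hm]. split; [exact Hn|split].
  - exact (F0_of Hm).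
  - intros A B [N [HN HB]] HAB. exists N; split; auto.
Qed.

Lemma upc_filter X (nu : Nbhd X) : @Filterbase X nu -> @PreTop X (upc nu).
Proof.
  intros [H Hf]. destruct (upc_raster H) as [Hc Hr]. split; auto.
  intros x. destruct (Hr x) as [a [b c]]. split; [auto|split;[auto|split;[auto|]]].
  intros A B [N1 [H1 H1']] [N2 [H2 H2']].
  destruct (Hf x) as [_ [_ F]]. destruct (F _ _ H1 H2) as [C [HC HC']].
  exists C. split.
  - exists C; split; auto.
  - intros y Cy. destruct (HC' y Cy). auto.
Qed.

Lemma upc_refl (C' C : SpaceClass) :
  (forall X nu, C X nu -> C' X (upc nu)) -> concretely_reflective C' C.
Proof.
  intros H X nu HC. exists (upc nu). split; [auto|split].
  - intros x M [N [HN HM]]. exists N; auto.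
  - intros Y mu f _ Hf x M HM. destruct (Hf x M HM) as [N [HN HN']].
    exists N. split; auto. exists N; auto.
Qed.

Lemma upc_corefl : concretely_coreflective Raster Centered.
Proof.
  intros X nu HC. exists (upc nu). split; [apply upc_raster; exact HC|split].
  - intros x M HM. exists M. split; auto. exists M; auto.
  - intros Y mu f [Hmc Hmr] Hf y M [N [HN HNM]].
    destruct (Hf y N HN) as [K [HK HK']]. exists K; split; auto.
Qed.

Lemma gen_pretop X (nu : Nbhd X) : is_centered nu -> @PreTop X (gen nu).
Proof.
  intros H.
  assert (Hc : is_centered (gen nu)).
  { intros x. destruct (H x) as [[N HN] Hm]. split.
    - exists N, [N]. split; [discriminate|split].
      + constructor; auto.
      + intros y Hy. inversion Hy; auto.
    - intros A [l [Hl [Hl1 Hl2]]]. apply Hl2.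
      eapply Forall_impl; [|exact Hl1]. exact Hm. }
  split; auto. intros x. destruct (Hc x) as [Hn Hm].
  split; [exact Hn|split;[|split]].
  - exact (F0_of Hm).
  - intros A B [l [Hl [Hl1 Hl2]]] HAB. exists l; split; auto.
  - intros A B [l1 [Ha [Ha1 Ha2]]] [l2 [Hb [Hb1 Hb2]]].
    exists (fun y => A y /\ B y). split.
    + exists (l1 ++ l2). split; [destruct l1; [congruence|discriminate]|split].
      * apply Forall_app; auto.
      * intros y Hy. apply Forall_app in Hy. destruct Hy; auto.
    + auto.
Qed.

Lemma gen_pull Y X (mu : Nbhd Y) (nu : Nbhd X) (f : Y -> X) y :
  is_filterbase (mu y) -> centered_map mu nu f ->
  forall l, Forall (nu (f y)) l ->
  exists N, mu y N /\ forall z, N z -> Forall (fun B : X -> Prop => B (f z)) l.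
Proof.
  intros [[N0 HN0] [_ F2m]] Hf l. induction l as [|a l IH]; intros Hl.
  - exists N0. split; auto.
  - inversion Hl; subst. destruct (IH H2) as [N [HN HN']].
    destruct (Hf y a H1) as [K [HK HK']].
    destruct (F2m _ _ HK HN) as [C [HC HC']]. exists C. split; auto.
    intros z Cz. destruct (HC' z Cz). constructor; auto.
Qed.

Lemma gen_corefl (C' C : SpaceClass) :
  (forall X nu, C X nu -> is_centered nu) ->
  (forall X nu, @PreTop X nu -> C' X nu) ->
  (forall X nu, C' X nu -> @Filterbase X nu) -> concretely_coreflective C' C.
Proof.
  intros H1 H2 H3 X nu HC. exists (gen nu). split.
  { apply H2, gen_pretop, H1, HC. }
  split.
  - intros x M HM. exists M. split; auto. exists [M]. split; [discriminate|split].
    + constructor; auto.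
    + intros y Hy. inversion Hy; auto.
  - intros Y mu f HY Hf y M [l [Hl [Hl1 Hl2]]].
    destruct (H3 _ _ HY) as [_ Hfb].
    destruct (@gen_pull _ _ mu nu f y (Hfb y) Hf l Hl1) as [N [HN HN']].
    exists N; split; auto.
Qed.

Definition opens X (nu : Nbhd X) : (X -> Prop) -> Prop :=
  fun U => forall x, U x -> nu x U.
Definition topr X (nu : Nbhd X) : Nbhd X :=
  fun x A => exists U, opens nu U /\ U x /\ forall y, U y -> A y.

Lemma top_refl : concretely_reflective Top PreTop.
Proof.
  intros X nu [Hc Hf]. exists (topr nu).
  assert (Htop : is_topology (opens nu)).
  { split; [intros x []|split;[|split]].
    - intros x _. destruct (Hf x) as [[N HN] [_ [F1 _]]]. eapply F1; [exact HN|auto].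
    - intros U V HU HV x [Ux Vx]. destruct (Hf x) as [_ [_ [F1 F2]]].
      destruct (F2 _ _ (HU x Ux) (HV x Vx)) as [C [HC HC']].
      eapply F1; [exact HC|auto].
    - intros F HF x [U [FU Ux]]. destruct (Hf x) as [_ [_ [F1 _]]].
      eapply F1; [exact (HF U FU x Ux)|]. intros y Uy; exists U; auto. }
  split; [split|split].
  - assert (Hc' : is_centered (topr nu)).
    { intros x. split.
      - exists (fun _ => True), (fun _ => True). split; [apply Htop|auto].
      - intros A [U [_ [Ux HU]]]. auto. }
    split; auto. intros x. destruct (Hc' x) as [Hn Hm].
    split; [exact Hn|split;[|split]].
    + exact (F0_of Hm).
    + intros A B [U [HU [Ux HUB]]] HAB. exists U; auto.
    + intros A B [U [HU [Ux HUA]]] [V [HV [Vx HVB]]].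
      exists (fun y => U y /\ V y). split; [|intros y []; auto].
      exists (fun y => U y /\ V y). split; [apply Htop; auto|auto].
  - exists (opens nu). split; [exact Htop|]. intros x A. unfold topr. tauto.
  - intros x M [U [HU [Ux HUM]]]. exists U. split; auto.
  - intros Y mu f [HmP [tau [Htau Hchar]]] Hfm x M HM.
    apply Hchar in HM. destruct HM as [V [HV [Vfx HVM]]].
    exists (fun z => V (f z)). split.
    + exists (fun z => V (f z)). split; [|split; auto].
      intros z Vz. assert (Hmu : mu (f z) V).
      { apply Hchar. exists V; auto. }
      destruct (Hfm z V Hmu) as [N [HN HN']].
      destruct (Hf z) as [_ [_ [F1 _]]]. eapply F1; [exact HN|auto].
    + auto.
Qed.

Lemma pretop_fb X (nu : Nbhd X) : @PreTop X nu -> @Filterbase X nu.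
Proof.
  intros [H Hf]. split; auto. intros x. destruct (Hf x) as [a [b [c d]]].
  split; auto.
Qed.

Theorem mainTheorem6 :
  concretely_reflective Top PreTop /\
  (concretely_reflective PreTop Filterbase /\ concretely_coreflective PreTop Filterbase) /\
  concretely_coreflective PreTop Raster /\
  concretely_coreflective Filterbase Centered /\
  (concretely_reflective Raster Centered /\ concretely_coreflective Raster Centered).
Proof.
  split; [exact top_refl|split;[split|split;[|split;[|split]]]].
  - apply upc_refl. intros X nu H. apply upc_filter, H.
  - apply gen_corefl.
    + intros X nu [H _]; exact H.
    + intros X nu H; exact H.
    + exact pretop_fb.
  - apply gen_corefl.
    + intros X nu [H _]; exact H.
    + intros X nu H; exact H.
    + exact pretop_fb.
  - apply gen_corefl.
    + intros X nu H; exact H.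
    + exact pretop_fb.
    + intros X nu H; exact H.
  - apply upc_refl. intros X nu H. apply upc_raster, H.
  - exact upc_corefl.
Qed.
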